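(* Let $R\subseteq\mathbb N$ be a congruence-periodic sparse predicate, $d\in\mathbb N^+$, $\tilde R\subseteq^dR$, $n\in\mathbb N^+$, $\mathbf A$ an $n$-tuple of operators all $\neq_R0$, and $\Delta\in d\mathbb N$ sufficiently large. Then there is $\Lambda\in\mathbb N$ such that the following holds: for all $s,t,x\in\mathbb Z$ with $s\le t<x-\min\mathbf A\cdot\tilde R^n_\Delta$ if $A_1>_R0$ (respectively $s\ge t>x-\max\mathbf A\cdot\tilde R^n_\Delta$ if $A_1<_R0$), either (i) $P^1_\Delta(x-s;\mathbf A,\tilde R)=\sigma^\delta P^1_\Delta(x-t;\mathbf A,\tilde R)$ for some $0\le\delta\le\Lambda$, or (ii) $P^1_\Delta(x-s;\mathbf A,\tilde R)=\sigma^\varepsilon P^1_\Delta(t-s;\mathbf A,\tilde R)$ for some $0\le\varepsilon\le\Lambda$.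
   Context: Let $R\subseteq\mathbb N$ be infinite, enumerated increasingly as $(r_n)$; $\sigma:R\to R$ is the successor map, $\sigma^k$ its iterate ($\sigma^0=\mathrm{id}$). An operator on $R$ is $z\mapsto\sum_{i=0}^ma_i\sigma^i(z)$, $a_i\in\mathbb Z$. $A=_R0$: $Az=0$ for all $z\in R$; $A>_R0$ (resp. $<_R0$): $Az>0$ (resp. $<0$) for cofinitely many $z$. $R$ sparse: every operator satisfies (S1) $A=_R0$ or $A>_R0$ or $A<_R0$; (S2) if $A>_R0$ there is $\Delta$ with $A(\sigma^\Delta z)>z$ for all $z$. Congruence-periodic: $(r_n\bmod m)$ eventually periodic for each $m\ge1$. $\tilde R\subseteq^dR$: $\tilde R=\{r_{N+dt}:t\in\mathbb N\}$ for some $N$. $\mathbf A\cdot z=\sum A_iz_i$, $\mathbf A\cdot S=\{\mathbf A\cdot z:z\in S\}$. $\tilde R^n_\Delta=\{z\in\tilde R^n:z_i\ge\sigma^\Delta z_{i+1}\ (1\le i\le n)\}$, $z_{n+1}:=\min\tilde R$. For $\mathbf A$ with entries $\neq_R0$ and $\Delta$ large enough that $z\mapsto\mathbf A\cdot z$ is injective on $R^n_\Delta$, $P_\Delta(x;\mathbf A,\tilde R)$ is the $z\in\tilde R^n_\Delta$ with largest $\mathbf A\cdot z$ subject to $\mathbf A\cdot z<x$ if $x>\inf\mathbf A\cdot\tilde R^n_\Delta$, and otherwise the $z\in\tilde R^n_\Delta$ minimising $\mathbf A\cdot z$; $P^1_\Delta$ is its first coordinate. ''$\Delta\in d\mathbb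 N$ sufficiently large'' means $\Delta\ge\Delta_0$ for some suitable $\Delta_0$. *)

(* Defs.v *)
From Stdlib Require Import Arith ZArith List Lia ClassicalEpsilon.
Import ListNotations.
Open Scope Z_scope.

Definition cntR (R : nat -> bool) (k : nat) : nat :=
  length (filter R (seq 0 k)).

Definition Rinfinite (R : nat -> bool) : Prop :=
  forall m : nat, exists k : nat, (m <= k)%nat /\ R k = true.

(* r_n : the n-th element (0-indexed) of R in increasing order *)
Definition enumR (R : nat -> bool) (n : nat) : nat :=
  epsilon (inhabits 0%nat) (fun k => R k = true /\ cntR R k = n).

(* successor map σ : the least element of R strictly greater than z *)
Definition succR (R : nat -> bool) (z : nat) : nat :=
  enumR R (cntR R (S z)).

Definition succRk (R : nat -> bool) (k : nat) (z : nat) : nat :=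
  Nat.iter k (succR R) z.

(* An operator is the list of its integer coefficients [a_0; ...; a_m];
   it acts by z ↦ Σ a_i σ^i(z). *)
Definition operator := list Z.

Fixpoint opApp_from (R : nat -> bool) (A : operator) (i : nat) (z : nat) : Z :=
  match A with
  | [] => 0
  | a :: A' => a * Z.of_nat (succRk R i z) + opApp_from R A' (S i) z
  end.

Definition opApp (R : nat -> bool) (A : operator) (z : nat) : Z :=
  opApp_from R A 0 z.

Definition opEq0 (R : nat -> bool) (A : operator) : Prop :=
  forall z, R z = true -> opApp R A z = 0.

Definition opPos (R : nat -> bool) (A : operator) : Prop :=
  exists N : nat, forall z, R z = true -> (N <= z)%nat -> opApp R A z > 0.

Definition opNeg (R : nat -> bool) (A : operator) : Prop :=
  exists N : nat, forall z, R z = true -> (N <= z)%nat -> opApp R A z < 0.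

Definition sparse (R : nat -> bool) : Prop :=
  Rinfinite R /\
  forall A : operator,
    (opEq0 R A \/ opPos R A \/ opNeg R A) /\
    (opPos R A -> exists Delta : nat, forall z, R z = true ->
        opApp R A (succRk R Delta z) > Z.of_nat z).

Definition congruence_periodic (R : nat -> bool) : Prop :=
  forall m : nat, (1 <= m)%nat ->
    exists p N0 : nat, (1 <= p)%nat /\
      forall k : nat, (N0 <= k)%nat ->
        Nat.modulo (enumR R (k + p)) m = Nat.modulo (enumR R k) m.

(* R~ = { r_{N + d t} : t ∈ ℕ }  (R~ ⊆^d R, determined by N and d) *)
Definition Rsub (R : nat -> bool) (N d : nat) (k : nat) : Prop :=
  exists t : nat, k = enumR R (N + d * t).

(* z_i, 0-indexed (z_1 of the paper is index 0), with z_{n+1} := min R~ = r_N *)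
Definition zext (R : nat -> bool) (N : nat) (n : nat) (z : list nat) (i : nat) : nat :=
  if (i <? n)%nat then nth i z 0%nat else enumR R N.

Definition inRtildeDelta (R : nat -> bool) (N d n Delta : nat) (z : list nat) : Prop :=
  length z = n /\
  (forall i, (i < n)%nat -> Rsub R N d (nth i z 0%nat)) /\
  (forall i, (i < n)%nat ->
     (succRk R Delta (zext R N n z (S i)) <= nth i z 0%nat)%nat).

Fixpoint dotA (R : nat -> bool) (A : list operator) (z : list nat) : Z :=
  match A, z with
  | a :: A', zi :: z' => opApp R a zi + dotA R A' z'
  | _, _ => 0
  end.

(* The specification of P_Δ(x; A, R~):
   if x > inf A·R~^n_Δ (i.e. some value of A·R~^n_Δ is < x), the z with the
   largest A·z subject to A·z < x; otherwise the z minimising A·z. *)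
Definition isP (R : nat -> bool) (N d n Delta : nat) (A : list operator) (x : Z)
    (z : list nat) : Prop :=
  inRtildeDelta R N d n Delta z /\
  ( ( (exists w, inRtildeDelta R N d n Delta w /\ dotA R A w < x) /\
      dotA R A z < x /\
      forall w, inRtildeDelta R N d n Delta w -> dotA R A w < x ->
        dotA R A w <= dotA R A z )
  \/
    ( ~ (exists w, inRtildeDelta R N d n Delta w /\ dotA R A w < x) /\
      forall w, inRtildeDelta R N d n Delta w -> dotA R A z <= dotA R A w ) ).

Definition PDelta (R : nat -> bool) (N d n Delta : nat) (A : list operator) (x : Z)
  : list nat :=
  epsilon (inhabits []) (isP R N d n Delta A x).

Definition P1Delta (R : nat -> bool) (N d n Delta : nat) (A : list operator) (x : Z)
  : nat :=
  nth 0 (PDelta R N d n Delta A x) 0%nat.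

Definition isMinDot (R : nat -> bool) (N d n Delta : nat) (A : list operator) (m : Z) : Prop :=
  (exists z, inRtildeDelta R N d n Delta z /\ dotA R A z = m) /\
  forall z, inRtildeDelta R N d n Delta z -> m <= dotA R A z.

Definition isMaxDot (R : nat -> bool) (N d n Delta : nat) (A : list operator) (M : Z) : Prop :=
  (exists z, inRtildeDelta R N d n Delta z /\ dotA R A z = M) /\
  forall z, inRtildeDelta R N d n Delta z -> dotA R A z <= M.

(* Main.v *)
Require Import Defs.
From Stdlib Require Import Arith ZArith List Lia Classical ClassicalEpsilon.
Import ListNotations.
Open Scope Z_scope.



Lemma cntR_S R k : cntR R (S k) = (cntR R k + (if R k then 1 else 0))%nat.
Proof.
  unfold cntR. rewrite seq_S, filter_app, length_app. simpl.
  destruct (R k); simpl; lia.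
Qed.

Lemma cntR_mono R a b : (a <= b)%nat -> (cntR R a <= cntR R b)%nat.
Proof.
  induction 1; auto. rewrite cntR_S. lia.
Qed.

Lemma cntR_lt R a b : R a = true -> (a < b)%nat -> (cntR R a < cntR R b)%nat.
Proof.
  intros Ha Hab. pose proof (cntR_mono R (S a) b Hab). rewrite cntR_S, Ha in H. lia.
Qed.

Lemma least_above R z : Rinfinite R -> exists k, R k = true /\ (z <= k)%nat /\ cntR R k = cntR R z.
Proof.
  intros Hinf. destruct (Hinf z) as [k1 [Hk1 Rk1]].
  remember (k1 - z)%nat as m. revert z Hk1 Heqm.
  induction m as [m IH] using lt_wf_ind. intros z Hz Hm.
  destruct (R z) eqn:Rz.
  - exists z. split; auto.
  - assert (z <> k1) by (intro; subst; congruence).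
    destruct (IH (k1 - S z)%nat ltac:(lia) (S z) ltac:(lia) eq_refl) as [k [A [B C]]].
    exists k. split; auto. split. lia. rewrite C, cntR_S, Rz. lia.
Qed.

Lemma enum_exists R j : Rinfinite R -> exists k, R k = true /\ cntR R k = j.
Proof.
  intros Hinf. induction j.
  - destruct (least_above R 0 Hinf) as [k [A [_ C]]]. exists k. split; auto.
  - destruct IHj as [k [A B]]. destruct (least_above R (S k) Hinf) as [k' [A' [_ C']]].
    exists k'. split; auto. rewrite C', cntR_S, A. lia.
Qed.

Lemma enum_spec R j : Rinfinite R -> R (enumR R j) = true /\ cntR R (enumR R j) = j.
Proof.
  intros Hinf. unfold enumR. apply epsilon_spec. apply enum_exists; auto.
Qed.

Lemma succ_spec R z : Rinfinite R ->
  R (succR R z) = true /\ (z < succR R z)%nat /\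
  forall v, R v = true -> (z < v)%nat -> (succR R z <= v)%nat.
Proof.
  intros Hinf. unfold succR. destruct (enum_spec R (cntR R (S z)) Hinf) as [A B].
  set (k := enumR R (cntR R (S z))) in *.
  assert (z < k)%nat.
  { destruct (le_lt_dec k z); auto. pose proof (cntR_lt R k (S z) A ltac:(lia)). lia. }
  split; auto. split; auto. intros v Rv Hv.
  destruct (le_lt_dec k v); auto. pose proof (cntR_lt R v k Rv l).
  pose proof (cntR_mono R (S z) v Hv). lia.
Qed.

Lemma succ_enum R j : Rinfinite R -> succR R (enumR R j) = enumR R (S j).
Proof.
  intros Hinf. unfold succR. destruct (enum_spec R j Hinf) as [A B].
  rewrite cntR_S, A, B. f_equal. lia.
Qed.

Lemma succ_mono R a b : Rinfinite R -> (a <= b)%nat -> (succR R a <= succR R b)%nat.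
Proof.
  intros Hinf H. destruct (succ_spec R a Hinf) as [_ [_ C]].
  destruct (succ_spec R b Hinf) as [A [B _]]. apply C; auto. lia.
Qed.

Lemma succ_reflect R a b : Rinfinite R -> R a = true -> (succR R a <= succR R b)%nat -> (a <= b)%nat.
Proof.
  intros Hinf Ra H. destruct (le_lt_dec a b); auto.
  destruct (succ_spec R b Hinf) as [_ [_ C]]. specialize (C a Ra l).
  destruct (succ_spec R a Hinf) as [_ [B _]]. lia.
Qed.

Lemma iterk_S R k z : succRk R (S k) z = succR R (succRk R k z).
Proof. reflexivity. Qed.

Lemma iterk_S_r R k z : succRk R (S k) z = succRk R k (succR R z).
Proof. unfold succRk. apply Nat.iter_succ_r. Qed.

Lemma iterk_add R a b z : succRk R (a + b) z = succRk R a (succRk R b z).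
Proof. unfold succRk. apply Nat.iter_add. Qed.

Lemma iterk_ge R k z : Rinfinite R -> (z + k <= succRk R k z)%nat.
Proof.
  intros Hinf. induction k; simpl. lia. fold (succRk R k z).
  destruct (succ_spec R (succRk R k z) Hinf) as [_ [B _]]. lia.
Qed.

Lemma iterk_R R k z : Rinfinite R -> R z = true -> R (succRk R k z) = true.
Proof.
  intros Hinf Rz. destruct k; auto. rewrite iterk_S. apply succ_spec; auto.
Qed.

Lemma iterk_mono R k a b : Rinfinite R -> (a <= b)%nat -> (succRk R k a <= succRk R k b)%nat.
Proof.
  intros Hinf H. induction k; simpl; auto. apply succ_mono; auto.
Qed.

Lemma iterk_mono_k R i j z : Rinfinite R -> (i <= j)%nat -> (succRk R i z <= succRk R j z)%nat.
Proof.
  intros Hinf H. replace j with ((j - i) + i)%nat by lia. rewrite iterk_add.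
  pose proof (iterk_ge R (j-i) (succRk R i z) Hinf). lia.
Qed.

Lemma iterk_strict R i j z : Rinfinite R -> (i < j)%nat -> (succRk R i z < succRk R j z)%nat.
Proof.
  intros Hinf H. replace j with ((j - i) + i)%nat by lia. rewrite iterk_add.
  pose proof (iterk_ge R (j-i) (succRk R i z) Hinf). lia.
Qed.

Lemma reach R a b : Rinfinite R -> R a = true -> R b = true -> (a <= b)%nat ->
  exists i, b = succRk R i a.
Proof.
  intros Hinf Ra Rb. remember (b - a)%nat as m. revert a Ra Heqm.
  induction m as [m IH] using lt_wf_ind. intros a Ra Hm Hab.
  destruct (Nat.eq_dec a b). { exists 0%nat. subst; reflexivity. }
  destruct (succ_spec R a Hinf) as [A [B C]].
  specialize (C b Rb ltac:(lia)).
  destruct (IH (b - succR R a)%nat ltac:(lia) (succR R a) A eq_refl C) as [i Hi].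
  exists (S i). rewrite iterk_S_r. auto.
Qed.

Lemma iter_reflect R i j z : Rinfinite R -> (succRk R i z <= succRk R j z)%nat -> (i <= j)%nat.
Proof.
  intros Hinf H. destruct (le_lt_dec i j); auto. pose proof (iterk_strict R j i z Hinf l). lia.
Qed.

Lemma iterk_reflect R k a b : Rinfinite R -> R a = true ->
  (succRk R k a <= succRk R k b)%nat -> (a <= b)%nat.
Proof.
  intros Hinf Ra. induction k; simpl; auto. intros H.
  apply IHk. apply succ_reflect in H; auto. apply iterk_R; auto.
Qed.

Lemma Rsub_R R N d x : Rinfinite R -> Rsub R N d x -> R x = true.
Proof. intros Hinf [t ->]. apply enum_spec; auto. Qed.

Lemma succ_enum_k R k j : Rinfinite R -> succRk R k (enumR R j) = enumR R (k + j).
Proof.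
  intros Hinf. induction k; simpl; auto. fold (succRk R k (enumR R j)). rewrite IHk.
  apply succ_enum; auto.
Qed.

Lemma Rsub_succ R N d x : Rinfinite R -> Rsub R N d x -> Rsub R N d (succRk R d x).
Proof.
  intros Hinf [t ->]. exists (S t). rewrite succ_enum_k; auto. f_equal. lia.
Qed.

Lemma Rsub_succ_mult R N d x c : Rinfinite R -> Rsub R N d x -> Rsub R N d (succRk R (d * c) x).
Proof.
  intros Hinf H. induction c. rewrite Nat.mul_0_r. auto.
  replace (d * S c)%nat with (d + d * c)%nat by lia. rewrite iterk_add. apply Rsub_succ; auto.
Qed.



Lemma opApp_from_shift R F j u :
  opApp_from R F (S j) u = opApp_from R F j (succR R u).
Proof.
  revert j. induction F; intros j; cbn [opApp_from]; auto. rewrite IHF, iterk_S_r. reflexivity.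
Qed.

Fixpoint opsub (F G : operator) : operator :=
  match F, G with
  | [], G => map Z.opp G
  | F, [] => F
  | a :: F', b :: G' => (a - b) :: opsub F' G'
  end.

Lemma opApp_from_neg R G j u : opApp_from R (map Z.opp G) j u = - opApp_from R G j u.
Proof. revert j. induction G; intros j; simpl; auto. rewrite IHG. lia. Qed.

Lemma opApp_from_sub R F G j u :
  opApp_from R (opsub F G) j u = opApp_from R F j u - opApp_from R G j u.
Proof.
  revert G j. induction F; intros G j.
  - simpl. rewrite opApp_from_neg. lia.
  - destruct G; simpl. lia. rewrite IHF. lia.
Qed.

Definition diffop (F : operator) : operator := opsub (0 :: F) F.

Lemma diffop_spec R F u : opApp R (diffop F) u = opApp R F (succR R u) - opApp R F u.
Proof.
  unfold diffop, opApp. rewrite opApp_from_sub. simpl. rewrite opApp_from_shift. lia.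
Qed.

Lemma opApp_neg R F u : opApp R (map Z.opp F) u = - opApp R F u.
Proof. apply opApp_from_neg. Qed.

Fixpoint norm1 (F : operator) : Z :=
  match F with [] => 0 | a :: F' => Z.abs a + norm1 F' end.

Lemma norm1_nonneg F : 0 <= norm1 F.
Proof. induction F; simpl; lia. Qed.

Lemma opApp_from_bound R F j u : Rinfinite R ->
  Z.abs (opApp_from R F j u) <= norm1 F * Z.of_nat (succRk R (j + length F) u).
Proof.
  intros Hinf. revert j. induction F; intros j; cbn [opApp_from norm1 length]. lia.
  specialize (IHF (S j)). replace (S j + length F)%nat with (j + S (length F))%nat in IHF by lia.
  pose proof (iterk_mono_k R j (j + S (length F)) u Hinf ltac:(lia)).
  pose proof (norm1_nonneg F).
  assert (Z.abs (a * Z.of_nat (succRk R j u)) <= Z.abs a * Z.of_nat (succRk R (j + S (length F)) u)).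
  { rewrite Z.abs_mul, (Z.abs_eq (Z.of_nat _)) by lia. apply Z.mul_le_mono_nonneg_l; lia. }
  lia.
Qed.

Lemma opApp_bound R F u k : Rinfinite R -> (length F <= k)%nat ->
  Z.abs (opApp R F u) <= norm1 F * Z.of_nat (succRk R k u).
Proof.
  intros Hinf Hk. unfold opApp. pose proof (opApp_from_bound R F 0 u Hinf). simpl in H.
  pose proof (iterk_mono_k R (length F) k u Hinf Hk). pose proof (norm1_nonneg F). nia.
Qed.

Lemma pos_mono R F : sparse R -> opPos R F ->
  exists N0 : nat, forall u, R u = true -> (N0 <= u)%nat -> opApp R F u < opApp R F (succR R u).
Proof.
  intros [Hinf Hsp] Hpos.
  destruct (Hsp F) as [_ S2]. destruct (S2 Hpos) as [D HD].
  destruct (Hsp (diffop F)) as [[Heq | [Hp | Hn]] _].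
  - exfalso. destruct (Hinf 0%nat) as [z0 [_ Rz0]].
    assert (forall i, opApp R F (succRk R i z0) = opApp R F z0).
    { induction i; simpl; auto. fold (succRk R i z0). specialize (Heq (succRk R i z0) (iterk_R R i z0 Hinf Rz0)).
      rewrite diffop_spec in Heq. lia. }
    set (M := Z.to_nat (opApp R F z0)).
    specialize (HD (succRk R M z0) (iterk_R R M z0 Hinf Rz0)).
    rewrite <- iterk_add, H in HD. pose proof (iterk_ge R M z0 Hinf). lia.
  - destruct Hp as [N0 HN]. exists N0. intros u Ru Hu. specialize (HN u Ru Hu). rewrite diffop_spec in HN. lia.
  - exfalso. destruct Hn as [N' HN]. destruct (Hinf N') as [z0 [Hz0 Rz0]].
    assert (forall i, opApp R F (succRk R i z0) <= opApp R F z0).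
    { induction i; simpl. lia. fold (succRk R i z0).
      assert (Ri := iterk_R R i z0 Hinf Rz0). pose proof (iterk_ge R i z0 Hinf).
      specialize (HN _ Ri ltac:(lia)). rewrite diffop_spec in HN. lia. }
    set (M := Z.to_nat (opApp R F z0)).
    specialize (HD (succRk R M z0) (iterk_R R M z0 Hinf Rz0)).
    rewrite <- iterk_add in HD. specialize (H (D + M)%nat). pose proof (iterk_ge R M z0 Hinf). lia.
Qed.

Lemma mono_iter R F N0 : Rinfinite R ->
  (forall u, R u = true -> (N0 <= u)%nat -> opApp R F u < opApp R F (succR R u)) ->
  forall u i, R u = true -> (N0 <= u)%nat -> opApp R F u <= opApp R F (succRk R i u).
Proof.
  intros Hinf H u i Ru Hu. induction i. simpl. lia. rewrite iterk_S.
  pose proof (iterk_ge R i u Hinf). specialize (H _ (iterk_R R i u Hinf Ru) ltac:(lia)). lia.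
Qed.

Lemma mono_le R F N0 : Rinfinite R ->
  (forall u, R u = true -> (N0 <= u)%nat -> opApp R F u < opApp R F (succR R u)) ->
  forall u w, R u = true -> R w = true -> (N0 <= u)%nat -> (u <= w)%nat -> opApp R F u <= opApp R F w.
Proof.
  intros Hinf H u w Ru Rw Hu Huw. destruct (reach R u w Hinf Ru Rw Huw) as [i ->].
  eapply mono_iter; eauto.
Qed.

Lemma geometric R : sparse R -> exists g : nat, forall u, R u = true -> (2 * u <= succRk R g u)%nat.
Proof.
  intros [Hinf Hsp]. destruct (Hsp [-1; 1]) as [_ S2].
  assert (opPos R [-1;1]).
  { exists 0%nat. intros z Rz _. unfold opApp. cbn [opApp_from]. change (succRk R 0 z) with z. change (succRk R 1 z) with (succR R z). destruct (succ_spec R z Hinf) as [_ [B _]]. lia. }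
  destruct (S2 H) as [D HD]. exists (S D). intros u Ru. specialize (HD u Ru).
  unfold opApp in HD. cbn [opApp_from] in HD. change (succRk R 0 ?x) with x in HD. change (succRk R 1 ?x) with (succR R x) in HD. rewrite iterk_S. pose proof (iterk_ge R D u Hinf). lia.
Qed.

Lemma geometric_pow R : sparse R -> exists g : nat, forall t u, R u = true ->
  (2 ^ t * u <= succRk R (g * t) u)%nat.
Proof.
  intros Hs. destruct (geometric R Hs) as [g Hg]. exists g. induction t; intros u Ru.
  simpl. rewrite Nat.mul_0_r. simpl. lia.
  replace (g * S t)%nat with (g + g * t)%nat by lia. rewrite iterk_add.
  specialize (IHt u Ru). pose proof (Hg _ (iterk_R R (g*t) u (proj1 Hs) Ru)). simpl. lia.
Qed.

Lemma key_growth R F : sparse R -> opPos R F -> forall (c : Z) (k' : nat), exists J : nat,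
  forall x w, R x = true -> R w = true -> (succRk R J x <= w)%nat ->
  opApp R F w > c * Z.of_nat (succRk R k' x).
Proof.
  intros Hs Hpos c k'. pose proof (proj1 Hs) as Hinf.
  destruct (pos_mono R F Hs Hpos) as [N0 HN].
  destruct ((proj2 Hs) F) as [_ S2]. destruct (S2 Hpos) as [D HD].
  destruct (geometric_pow R Hs) as [g Hg].
  set (t := Z.to_nat c).
  exists (D + (g * t + k' + N0))%nat. intros x w Rx Rw Hw.
  set (y := succRk R (g * t + k' + N0) x).
  assert (Ry : R y = true) by (apply iterk_R; auto).
  assert (HJ: succRk R (D + (g * t + k' + N0)) x = succRk R D y) by (apply iterk_add).
  rewrite HJ in Hw.
  pose proof (iterk_ge R D y Hinf). pose proof (iterk_ge R (g*t+k'+N0) x Hinf).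
  pose proof (mono_le R F N0 Hinf HN (succRk R D y) w (iterk_R R D y Hinf Ry) Rw ltac:(lia) Hw).
  specialize (HD y Ry).
  assert (y >= 2 ^ t * succRk R k' x)%nat.
  { unfold y. replace (g * t + k' + N0)%nat with (N0 + (g * t + k'))%nat by lia. rewrite iterk_add.
    rewrite (iterk_add R (g*t) k'). pose proof (iterk_ge R N0 (succRk R (g * t) (succRk R k' x)) Hinf).
    pose proof (Hg t (succRk R k' x) (iterk_R R k' x Hinf Rx)). lia. }
  assert (c <= Z.of_nat (2 ^ t)).
  { pose proof (Nat.pow_gt_lin_r 2 t ltac:(lia)). unfold t in *. lia. }
  assert (c * Z.of_nat (succRk R k' x) <= Z.of_nat (2^t) * Z.of_nat (succRk R k' x)) by (apply Z.mul_le_mono_nonneg_r; lia).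
  lia.
Qed.



Lemma core R F W k : sparse R -> opPos R F -> 0 <= W ->
  exists D1 L : nat, forall Delta, (D1 <= Delta)%nat ->
  (forall z1 v T, R z1 = true -> R v = true -> (succRk R Delta v <= z1)%nat ->
     Z.abs T <= W * Z.of_nat (succRk R k v) -> opApp R F z1 + T > 0) /\
  (forall z1 v T z1' v' T', R z1 = true -> R v = true -> (succRk R Delta v <= z1)%nat ->
     Z.abs T <= W * Z.of_nat (succRk R k v) ->
     R z1' = true -> R v' = true -> (succRk R Delta v' <= z1')%nat ->
     Z.abs T' <= W * Z.of_nat (succRk R k v') ->
     (z1 < z1')%nat -> opApp R F z1 + T < opApp R F z1' + T') /\
  (forall z1 v T z1' v' T', R z1 = true -> R v = true -> (succRk R Delta v <= z1)%nat ->
     Z.abs T <= W * Z.of_nat (succRk R k v) ->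
     R z1' = true -> R v' = true -> (succRk R Delta v' <= z1')%nat ->
     Z.abs T' <= W * Z.of_nat (succRk R k v') ->
     (succRk R L z1 <= z1')%nat -> 2 * (opApp R F z1 + T) <= opApp R F z1' + T').
Proof.
  intros Hs Hpos HW. pose proof (proj1 Hs) as Hinf.
  destruct (pos_mono R F Hs Hpos) as [NF HNF].
  assert (HE : opPos R (diffop F)).
  { exists NF. intros u Ru Hu. rewrite diffop_spec. specialize (HNF u Ru Hu). lia. }
  destruct (key_growth R F Hs Hpos W k) as [J1 HJ1].
  destruct (key_growth R (diffop F) Hs HE (2 * W) k) as [J2 HJ2].
  destruct (key_growth R F Hs Hpos (2 * W) k) as [J3 HJ3].
  destruct (key_growth R F Hs Hpos (4 * (norm1 F + W)) (k + length F)) as [J4 HJ4].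
  exists (J1 + J2 + J3 + NF + 1)%nat, J4. intros Delta HD.
  split; [|split].
  - intros z1 v T Rz1 Rv Hv HT.
    assert (succRk R J1 v <= z1)%nat by (pose proof (iterk_mono_k R J1 Delta v Hinf ltac:(lia)); lia).
    specialize (HJ1 v z1 Rv Rz1 H). lia.
  - intros z1 v T z1' v' T' Rz1 Rv Hv HT Rz1' Rv' Hv' HT' Hlt.
    destruct (reach R z1 z1' Hinf Rz1 Rz1' ltac:(lia)) as [j Hj].
    destruct j as [|j]. { simpl in Hj. lia. }
    set (w' := succRk R j z1).
    assert (Rw' : R w' = true) by (apply iterk_R; auto).
    assert (Hz1' : z1' = succR R w') by (rewrite Hj; apply iterk_S).
    assert (Hz1w : (z1 <= w')%nat) by (pose proof (iterk_ge R j z1 Hinf); unfold w'; lia).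
    assert (HvD : (Delta <= z1)%nat) by (pose proof (iterk_ge R Delta v Hinf); lia).
    pose proof (mono_le R F NF Hinf HNF z1 w' Rz1 Rw' ltac:(lia) Hz1w) as Hm.
    assert (H1 : (succRk R J2 v <= w')%nat) by (pose proof (iterk_mono_k R J2 Delta v Hinf ltac:(lia)); lia).
    assert (H2 : (succRk R J2 v' <= w')%nat).
    { replace Delta with (S (Delta - 1)) in Hv' by lia. rewrite iterk_S in Hv'.
      rewrite Hz1' in Hv'. apply succ_reflect in Hv'; auto; [|apply iterk_R; auto].
      pose proof (iterk_mono_k R J2 (Delta - 1) v' Hinf ltac:(lia)). lia. }
    pose proof (HJ2 v w' Rv Rw' H1) as E1. pose proof (HJ2 v' w' Rv' Rw' H2) as E2.
    rewrite diffop_spec in E1, E2. rewrite <- Hz1' in E1, E2. lia.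
  - intros z1 v T z1' v' T' Rz1 Rv Hv HT Rz1' Rv' Hv' HT' Hle.
    pose proof (HJ4 z1 z1' Rz1 Rz1' Hle) as K4.
    assert (succRk R J3 v' <= z1')%nat by (pose proof (iterk_mono_k R J3 Delta v' Hinf ltac:(lia)); lia).
    pose proof (HJ3 v' z1' Rv' Rz1' H) as K3.
    pose proof (opApp_bound R F z1 (k + length F) Hinf ltac:(lia)) as BF.
    set (X := Z.of_nat (succRk R (k + length F) z1)) in *.
    assert (Hvz : Z.of_nat (succRk R k v) <= X).
    { unfold X. pose proof (iterk_ge R Delta v Hinf). pose proof (iterk_mono R k v z1 Hinf ltac:(lia)).
      pose proof (iterk_mono_k R k (k + length F) z1 Hinf ltac:(lia)). lia. }
    assert (W * Z.of_nat (succRk R k v) <= W * X) by (apply Z.mul_le_mono_nonneg_l; lia).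
    assert (4 * (norm1 F + W) * X = 4 * (norm1 F * X) + 4 * (W * X)) by ring.
    lia.
Qed.



Fixpoint normsum (Bs : list operator) : Z :=
  match Bs with [] => 0 | G :: Bs' => norm1 G + normsum Bs' end.
Fixpoint sumlen (Bs : list operator) : nat :=
  match Bs with [] => 0%nat | G :: Bs' => (length G + sumlen Bs')%nat end.

Lemma normsum_nonneg Bs : 0 <= normsum Bs.
Proof. induction Bs; simpl; auto. lia. pose proof (norm1_nonneg a). lia. Qed.

Lemma tail_bound R Bs zs v k : Rinfinite R -> (forall y, In y zs -> (y <= v)%nat) ->
  (forall G, In G Bs -> (length G <= k)%nat) ->
  Z.abs (dotA R Bs zs) <= normsum Bs * Z.of_nat (succRk R k v).
Proof.
  intros Hinf. revert zs. induction Bs as [|G Bs IH]; intros zs Hy HG; simpl.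
  - lia.
  - destruct zs as [|y zs]. { pose proof (normsum_nonneg (G::Bs)). simpl in H.
      pose proof (Zle_0_nat (succRk R k v)). nia. }
    pose proof (opApp_bound R G y k Hinf (HG G (or_introl eq_refl))).
    pose proof (iterk_mono R k y v Hinf (Hy y (or_introl eq_refl))).
    pose proof (norm1_nonneg G).
    assert (norm1 G * Z.of_nat (succRk R k y) <= norm1 G * Z.of_nat (succRk R k v)) by (apply Z.mul_le_mono_nonneg_l; lia).
    specialize (IH zs (fun y' H => Hy y' (or_intror H)) (fun G' H => HG G' (or_intror H))).
    lia.
Qed.

Lemma sumlen_ge Bs G : In G Bs -> (length G <= sumlen Bs)%nat.
Proof. induction Bs; simpl; intros H; [contradiction|]. destruct H; subst; [lia|]. specialize (IHBs H). lia. Qed.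

Lemma dom_decomp R N d n Delta z : Rinfinite R -> (1 <= n)%nat -> inRtildeDelta R N d n Delta z ->
  exists z1 zs, z = z1 :: zs /\ Rsub R N d z1 /\ R z1 = true /\
    R (zext R N n z 1) = true /\ (succRk R Delta (zext R N n z 1) <= z1)%nat /\
    (forall y, In y zs -> (y <= zext R N n z 1)%nat).
Proof.
  intros Hinf Hn [Hlen [Hsub Hch]].
  destruct z as [|z1 zs]. { simpl in Hlen. lia. }
  exists z1, zs. split; auto.
  assert (Rsub R N d z1) by (apply (Hsub 0%nat); lia).
  split; auto. split. eapply Rsub_R; eauto.
  split.
  - unfold zext. destruct (1 <? n)%nat eqn:E.
    + apply Nat.ltb_lt in E. exact (Rsub_R R N d _ Hinf (Hsub 1%nat E)).
    + apply enum_spec; auto.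
  - split. apply (Hch 0%nat); lia.
    intros y Hy. apply In_nth with (d := 0%nat) in Hy. destruct Hy as [i [Hi Hyi]].
    simpl in Hlen.
    assert (Hi1 : (S i < n)%nat) by lia.
    unfold zext. assert (E : (1 <? n)%nat = true) by (apply Nat.ltb_lt; lia). rewrite E.
    subst y. change (nth i zs 0%nat) with (nth (S i) (z1 :: zs) 0%nat).
    clear -Hch Hi1 Hinf. induction i.
    + lia.
    + specialize (IHi ltac:(lia)). specialize (Hch (S i) ltac:(lia)).
      unfold zext in Hch. assert (E : (S (S i) <? n)%nat = true) by (apply Nat.ltb_lt; lia). rewrite E in Hch.
      pose proof (iterk_ge R Delta (nth (S (S i)) (z1 :: zs) 0%nat) Hinf). lia.
Qed.

Lemma dom_replace R N d n Delta z1 zs q1 : inRtildeDelta R N d n Delta (z1 :: zs) ->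
  Rsub R N d q1 -> (z1 <= q1)%nat -> inRtildeDelta R N d n Delta (q1 :: zs).
Proof.
  intros [Hlen [Hsub Hch]] Hq Hle. split; [simpl in *; auto|split].
  - intros [|i] Hi; simpl; auto. apply (Hsub (S i) Hi).
  - intros i Hi. specialize (Hch i Hi).
    assert (Hz : zext R N n (q1 :: zs) (S i) = zext R N n (z1 :: zs) (S i)) by (unfold zext; reflexivity).
    rewrite Hz. destruct i; simpl in *; lia.
Qed.

Lemma dot_props R F Bs N d n : sparse R -> opPos R F -> length (F :: Bs) = n ->
  exists D1 L : nat, forall Delta, (D1 <= Delta)%nat ->
  (forall z, inRtildeDelta R N d n Delta z -> dotA R (F :: Bs) z > 0) /\
  (forall z z', inRtildeDelta R N d n Delta z -> inRtildeDelta R N d n Delta z' ->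
     (nth 0 z 0 < nth 0 z' 0)%nat -> dotA R (F :: Bs) z < dotA R (F :: Bs) z') /\
  (forall z z', inRtildeDelta R N d n Delta z -> inRtildeDelta R N d n Delta z' ->
     (succRk R L (nth 0 z 0) <= nth 0 z' 0)%nat -> 2 * dotA R (F :: Bs) z <= dotA R (F :: Bs) z').
Proof.
  intros Hs Hpos Hlen. pose proof (proj1 Hs) as Hinf.
  destruct (core R F (normsum Bs) (sumlen Bs) Hs Hpos (normsum_nonneg Bs)) as [D1 [L HC]].
  exists D1, L. intros Delta HD. destruct (HC Delta HD) as [CP [C1 C2]].
  assert (Hn : (1 <= n)%nat) by (simpl in Hlen; lia).
  assert (TB : forall z, inRtildeDelta R N d n Delta z -> exists z1 zs, z = z1 :: zs /\
     R z1 = true /\ R (zext R N n z 1) = true /\ (succRk R Delta (zext R N n z 1) <= z1)%nat /\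
     Z.abs (dotA R Bs zs) <= normsum Bs * Z.of_nat (succRk R (sumlen Bs) (zext R N n z 1))).
  { intros z Hz. destruct (dom_decomp R N d n Delta z Hinf Hn Hz) as [z1 [zs [-> [_ [A [B [C D]]]]]]].
    exists z1, zs. split; [reflexivity|]. split; [auto|]. split; [auto|]. split; [auto|]. apply tail_bound; auto. apply sumlen_ge. }
  split; [|split].
  - intros z Hz. destruct (TB z Hz) as [z1 [zs [-> [A [B [C D]]]]]]. simpl. eapply CP; eauto.
  - intros z z' Hz Hz' Hl. destruct (TB z Hz) as [z1 [zs [-> [A [B [C D]]]]]].
    destruct (TB z' Hz') as [z1' [zs' [-> [A' [B' [C' D']]]]]]. cbn [dotA nth] in Hl |- *. exact (C1 z1 _ _ z1' _ _ A B C D A' B' C' D' Hl).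
  - intros z z' Hz Hz' Hl. destruct (TB z Hz) as [z1 [zs [-> [A [B [C D]]]]]].
    destruct (TB z' Hz') as [z1' [zs' [-> [A' [B' [C' D']]]]]]. cbn [dotA nth] in Hl |- *. exact (C2 z1 _ _ z1' _ _ A B C D A' B' C' D' Hl).
Qed.

Lemma dotA_neg R A z : dotA R (map (map Z.opp) A) z = - dotA R A z.
Proof.
  revert z. induction A; intros z; simpl. lia. destruct z; simpl. lia.
  rewrite IHA, opApp_neg. lia.
Qed.



Lemma max_exists (Q : list nat -> Prop) (f : list nat -> Z) (u : Z) :
  (exists w, Q w /\ f w < u) ->
  exists z, Q z /\ f z < u /\ forall w, Q w -> f w < u -> f w <= f z.
Proof.
  intros [w0 [Q0 H0]]. apply NNPP. intros Hno.
  assert (forall k : nat, forall z, Q z -> f z < u -> (Z.to_nat (u - f z) <= k)%nat -> False).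
  { induction k; intros z Qz Hz Hk. lia.
    apply Hno. exists z. split; auto. split; auto. intros w Qw Hw.
    destruct (Z_le_gt_dec (f w) (f z)); auto. exfalso. apply (IHk w Qw Hw). lia. }
  apply (H _ w0 Q0 H0 (le_n _)).
Qed.

Lemma P_first R N d n Delta A u :
  (exists w, inRtildeDelta R N d n Delta w /\ dotA R A w < u) ->
  inRtildeDelta R N d n Delta (PDelta R N d n Delta A u) /\
  dotA R A (PDelta R N d n Delta A u) < u /\
  forall w, inRtildeDelta R N d n Delta w -> dotA R A w < u -> dotA R A w <= dotA R A (PDelta R N d n Delta A u).
Proof.
  intros Hex.
  assert (HP : isP R N d n Delta A u (PDelta R N d n Delta A u)).
  { unfold PDelta. apply epsilon_spec.
    destruct (max_exists (inRtildeDelta R N d n Delta) (dotA R A) u Hex) as [z [Q1 [Q2 Q3]]].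
    exists z. split; auto. }
  destruct HP as [Hd [[_ [H1 H2]] | [H1 _]]]. auto. contradiction.
Qed.

Lemma P_second R N d n Delta A u m :
  ~ (exists w, inRtildeDelta R N d n Delta w /\ dotA R A w < u) ->
  isMinDot R N d n Delta A m ->
  inRtildeDelta R N d n Delta (PDelta R N d n Delta A u) /\
  forall w, inRtildeDelta R N d n Delta w -> dotA R A (PDelta R N d n Delta A u) <= dotA R A w.
Proof.
  intros Hno [[z0 [Hz0 Hm]] Hmin].
  assert (HP : isP R N d n Delta A u (PDelta R N d n Delta A u)).
  { unfold PDelta. apply epsilon_spec. exists z0. split; auto. right. split; auto.
    intros w Hw. rewrite Hm. auto. }
  destruct HP as [Hd [[Hex _] | [_ H2]]]. contradiction. auto.
Qed.

Lemma conclude R a b L : Rinfinite R -> R a = true -> R b = true -> (b <= a)%nat ->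
  (a <= succRk R L b)%nat -> exists delta : nat, (delta <= L)%nat /\ a = succRk R delta b.
Proof.
  intros Hinf Ra Rb H1 H2. destruct (reach R b a Hinf Rb Ra H1) as [i ->].
  exists i. split; auto. eapply iter_reflect; eauto.
Qed.

Lemma pos_neg_absurd R F : Rinfinite R -> opPos R F -> opNeg R F -> False.
Proof.
  intros Hinf [N1 H1] [N2 H2]. destruct (Hinf (N1 + N2)%nat) as [z [Hz Rz]].
  specialize (H1 z Rz ltac:(lia)). specialize (H2 z Rz ltac:(lia)). lia.
Qed.



Theorem mainTheorem15 :
  forall (R : nat -> bool) (d N n : nat) (A : list operator),
    sparse R -> congruence_periodic R ->
    (1 <= d)%nat -> (1 <= n)%nat ->
    length A = n ->
    (forall i, (i < n)%nat -> ~ opEq0 R (nth i A [])) ->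
    exists Delta0 : nat, forall Delta : nat, (Delta0 <= Delta)%nat ->
      Nat.divide d Delta ->
      exists Lambda : nat, forall s t x : Z,
        ( (opPos R (nth 0 A []) /\ s <= t /\
             exists m, isMinDot R N d n Delta A m /\ t < x - m)
        \/ (opNeg R (nth 0 A []) /\ s >= t /\
             exists M, isMaxDot R N d n Delta A M /\ t > x - M) ) ->
        (exists delta : nat, (delta <= Lambda)%nat /\
            P1Delta R N d n Delta A (x - s)
            = succRk R delta (P1Delta R N d n Delta A (x - t)))
        \/
        (exists eps : nat, (eps <= Lambda)%nat /\
            P1Delta R N d n Delta A (x - s)
            = succRk R eps (P1Delta R N d n Delta A (t - s))).
Proof.
  intros R d N n A Hs Hcp Hd Hn Hlen Hnz.
  pose proof (proj1 Hs) as Hinf.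
  destruct A as [|F Bs]; [simpl in Hlen; lia|].
  assert (H0 : ~ opEq0 R F) by exact (Hnz 0%nat ltac:(lia)).
  destruct ((proj2 Hs) F) as [[Heq|[Hp|Hng]] _]; [contradiction| |].
  -
    destruct (dot_props R F Bs N d n Hs Hp Hlen) as [D1 [L HDP]].
    exists D1. intros Delta HD _. destruct (HDP Delta HD) as [DP [DL1 DL2]].
    assert (ORD : forall z z', inRtildeDelta R N d n Delta z -> inRtildeDelta R N d n Delta z' ->
      dotA R (F :: Bs) z <= dotA R (F :: Bs) z' -> (nth 0%nat z 0%nat <= nth 0%nat z' 0%nat)%nat).
    { intros z z' Hz Hz' Hle. destruct (le_lt_dec (nth 0%nat z 0%nat) (nth 0%nat z' 0%nat)); auto.
      specialize (DL1 z' z Hz' Hz l). lia. }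
    exists (L + d)%nat. intros s t x Hyp.
    destruct Hyp as [[_ [Hst [m [Hm Hx]]]] | [Hng' _]];
      [| exfalso; exact (pos_neg_absurd R F Hinf Hp Hng')].
    pose proof Hm as [[z0 [Hz0 Hzm]] Hmin].
    assert (Hm0 : m > 0) by (specialize (DP z0 Hz0); lia).
    assert (S1 : exists w, inRtildeDelta R N d n Delta w /\ dotA R (F :: Bs) w < x - t) by (exists z0; split; auto; lia).
    assert (S2 : exists w, inRtildeDelta R N d n Delta w /\ dotA R (F :: Bs) w < x - s) by (exists z0; split; auto; lia).
    unfold P1Delta.
    set (pa := PDelta R N d n Delta (F :: Bs) (x - s)).
    set (pb := PDelta R N d n Delta (F :: Bs) (x - t)).
    set (pc := PDelta R N d n Delta (F :: Bs) (t - s)).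
    destruct (P_first R N d n Delta (F :: Bs) (x - s) S2) as [Da [Ha1 Ha2]]. fold pa in Da, Ha1, Ha2.
    destruct (P_first R N d n Delta (F :: Bs) (x - t) S1) as [Db [Hb1 Hb2]]. fold pb in Db, Hb1, Hb2.
    assert (Hbb : forall z, inRtildeDelta R N d n Delta z -> (nth 0%nat pb 0%nat < nth 0%nat z 0%nat)%nat -> x - t <= dotA R (F :: Bs) z).
    { intros z Hz Hlt. destruct (Z_le_gt_dec (x - t) (dotA R (F :: Bs) z)); auto.
      specialize (Hb2 z Hz ltac:(lia)). specialize (ORD z pb Hz Db Hb2). lia. }
    assert (Hc : inRtildeDelta R N d n Delta pc /\ dotA R (F :: Bs) pc <= dotA R (F :: Bs) pa /\
      forall z, inRtildeDelta R N d n Delta z -> (nth 0%nat pc 0%nat < nth 0%nat z 0%nat)%nat -> t - s <= dotA R (F :: Bs) z).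
    { destruct (classic (exists w, inRtildeDelta R N d n Delta w /\ dotA R (F :: Bs) w < t - s)) as [S3|S3].
      - destruct (P_first R N d n Delta (F :: Bs) (t - s) S3) as [Dc [Hc1 Hc2]]. fold pc in Dc, Hc1, Hc2.
        split; auto. split. apply Ha2; auto. lia.
        intros z Hz Hlt. destruct (Z_le_gt_dec (t - s) (dotA R (F :: Bs) z)); auto.
        specialize (Hc2 z Hz ltac:(lia)). specialize (ORD z pc Hz Dc Hc2). lia.
      - destruct (P_second R N d n Delta (F :: Bs) (t - s) m S3 Hm) as [Dc Hc2]. fold pc in Dc, Hc2.
        split; auto. split; auto.
        intros z Hz _. destruct (Z_le_gt_dec (t - s) (dotA R (F :: Bs) z)); auto.
        exfalso. apply S3. exists z. split; auto. lia. }
    destruct Hc as [Dc [Hca Hcc]].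
    assert (Hba : (nth 0%nat pb 0%nat <= nth 0%nat pa 0%nat)%nat) by (apply ORD; auto; apply Ha2; auto; lia).
    assert (Hcaa : (nth 0%nat pc 0%nat <= nth 0%nat pa 0%nat)%nat) by (apply ORD; auto).
    assert (Key : forall pe, inRtildeDelta R N d n Delta pe -> (nth 0%nat pb 0%nat <= nth 0%nat pe 0%nat)%nat ->
       (nth 0%nat pc 0%nat <= nth 0%nat pe 0%nat)%nat -> (nth 0%nat pa 0%nat < succRk R (L + d) (nth 0%nat pe 0%nat))%nat).
    { intros pe Hpe Hbe Hce.
      destruct (dom_decomp R N d n Delta pe Hinf Hn Hpe) as [e [tl [Epe [Hsub _]]]].
      rewrite Epe in Hpe, Hbe, Hce |- *. cbn [nth] in Hbe, Hce |- *.
      set (q := succRk R d e :: tl).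
      assert (Dq : inRtildeDelta R N d n Delta q).
      { apply (dom_replace R N d n Delta e tl); auto. apply Rsub_succ; auto.
        pose proof (iterk_ge R d e Hinf). lia. }
      assert (Hlt : (e < succRk R d e)%nat) by (apply (iterk_strict R 0 d e Hinf); lia).
      pose proof (Hbb q Dq ltac:(simpl; lia)). pose proof (Hcc q Dq ltac:(simpl; lia)).
      rewrite iterk_add.
      destruct (le_lt_dec (succRk R L (succRk R d e)) (nth 0%nat pa 0%nat)) as [Hge|Hlt2]; auto.
      exfalso. specialize (DL2 q pa Dq Da Hge). lia. }
    assert (Rpa : R (nth 0%nat pa 0%nat) = true).
    { destruct (dom_decomp R N d n Delta pa Hinf Hn Da) as [e [tl [-> [_ [Re _]]]]]. auto. }
    assert (Rpb : R (nth 0%nat pb 0%nat) = true).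
    { destruct (dom_decomp R N d n Delta pb Hinf Hn Db) as [e [tl [-> [_ [Re _]]]]]. auto. }
    assert (Rpc : R (nth 0%nat pc 0%nat) = true).
    { destruct (dom_decomp R N d n Delta pc Hinf Hn Dc) as [e [tl [-> [_ [Re _]]]]]. auto. }
    destruct (le_lt_dec (nth 0%nat pb 0%nat) (nth 0%nat pc 0%nat)) as [Hbc|Hbc].
    + right. apply conclude; auto. pose proof (Key pc Dc Hbc (le_n _)). lia.
    + left. apply conclude; auto. pose proof (Key pb Db (le_n _) ltac:(lia)). lia.
  -
    set (B := map (map Z.opp) (F :: Bs)).
    assert (HpB : opPos R (map Z.opp F)).
    { destruct Hng as [N0 HN]. exists N0. intros z Rz Hz. rewrite opApp_neg. specialize (HN z Rz Hz). lia. }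
    assert (HlenB : length (map Z.opp F :: map (map Z.opp) Bs) = n) by (rewrite <- Hlen; simpl; rewrite length_map; auto).
    destruct (dot_props R (map Z.opp F) (map (map Z.opp) Bs) N d n Hs HpB HlenB) as [D1 [L HDP]].
    exists D1. intros Delta HD _. destruct (HDP Delta HD) as [DP [DL1 DL2]].
    change (map Z.opp F :: map (map Z.opp) Bs) with (map (map Z.opp) (F :: Bs)) in DP, DL1, DL2.
    assert (DPn : forall z, inRtildeDelta R N d n Delta z -> dotA R (F :: Bs) z < 0).
    { intros z Hz. specialize (DP z Hz). rewrite dotA_neg in DP. lia. }
    assert (DL1n : forall z z', inRtildeDelta R N d n Delta z -> inRtildeDelta R N d n Delta z' ->
      (nth 0%nat z 0%nat < nth 0%nat z' 0%nat)%nat -> dotA R (F :: Bs) z' < dotA R (F :: Bs) z).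
    { intros z z' Hz Hz' Hl. specialize (DL1 z z' Hz Hz' Hl). rewrite !dotA_neg in DL1. lia. }
    assert (DL2n : forall z z', inRtildeDelta R N d n Delta z -> inRtildeDelta R N d n Delta z' ->
      (succRk R L (nth 0%nat z 0%nat) <= nth 0%nat z' 0%nat)%nat -> dotA R (F :: Bs) z' <= 2 * dotA R (F :: Bs) z).
    { intros z z' Hz Hz' Hl. specialize (DL2 z z' Hz Hz' Hl). rewrite !dotA_neg in DL2. lia. }
    clear DP DL1 DL2.
    assert (ORD : forall z z', inRtildeDelta R N d n Delta z -> inRtildeDelta R N d n Delta z' ->
      dotA R (F :: Bs) z <= dotA R (F :: Bs) z' -> (nth 0%nat z' 0%nat <= nth 0%nat z 0%nat)%nat).
    { intros z z' Hz Hz' Hle. destruct (le_lt_dec (nth 0%nat z' 0%nat) (nth 0%nat z 0%nat)); auto.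
      specialize (DL1n z z' Hz Hz' l). lia. }
    assert (Step : forall z, inRtildeDelta R N d n Delta z ->
      exists z', inRtildeDelta R N d n Delta z' /\ (nth 0%nat z' 0%nat = succRk R (d * L) (nth 0%nat z 0%nat))%nat /\
        (forall i, (1 <= i)%nat -> nth i z' 0%nat = nth i z 0%nat)).
    { intros z Hz. destruct (dom_decomp R N d n Delta z Hinf Hn Hz) as [e [tl [-> [Hsub _]]]].
      exists (succRk R (d * L) e :: tl). split; [|split; auto].
      - apply (dom_replace R N d n Delta e tl); auto. apply Rsub_succ_mult; auto.
        pose proof (iterk_ge R (d * L) e Hinf). lia.
      - intros [|i] Hi; simpl; auto. lia. }
    assert (Step2 : forall z, inRtildeDelta R N d n Delta z ->
      exists z', inRtildeDelta R N d n Delta z' /\ (nth 0%nat z' 0%nat = succRk R (d * L) (nth 0%nat z 0%nat))%nat /\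
        dotA R (F :: Bs) z' <= 2 * dotA R (F :: Bs) z).
    { intros z Hz. destruct (Step z Hz) as [z' [Hz' [E1 _]]]. exists z'. split; auto. split; auto.
      apply DL2n; auto. rewrite E1. apply iterk_mono_k; auto. nia. }
    exists (d * L + d)%nat. intros s t x Hyp.
    destruct Hyp as [[Hp' _] | [_ [Hst [M [HM Hx]]]]];
      [exfalso; exact (pos_neg_absurd R F Hinf Hp' Hng)|].
    destruct HM as [[z0 [Hz0 HzM]] HMax].
    assert (HM0 : M < 0) by (specialize (DPn z0 Hz0); lia).
    assert (Unb : forall j : nat, exists z, inRtildeDelta R N d n Delta z /\ dotA R (F :: Bs) z <= - Z.of_nat j).
    { induction j. exists z0. split; auto. lia.
      destruct IHj as [z [Hz Hzj]]. destruct (Step2 z Hz) as [z' [Hz' [_ H2]]].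
      exists z'. split; auto. specialize (DPn z Hz). lia. }
    assert (SS : forall u, exists w, inRtildeDelta R N d n Delta w /\ dotA R (F :: Bs) w < u).
    { intros u. destruct (Unb (Z.to_nat (1 - u))) as [z [Hz Hzu]]. exists z. split; auto. lia. }
    unfold P1Delta.
    set (pa := PDelta R N d n Delta (F :: Bs) (x - s)).
    set (pb := PDelta R N d n Delta (F :: Bs) (x - t)).
    set (pc := PDelta R N d n Delta (F :: Bs) (t - s)).
    destruct (P_first R N d n Delta (F :: Bs) (x - s) (SS _)) as [Da [Ha1 Ha2]]. fold pa in Da, Ha1, Ha2.
    destruct (P_first R N d n Delta (F :: Bs) (x - t) (SS _)) as [Db [Hb1 Hb2]]. fold pb in Db, Hb1, Hb2.
    destruct (P_first R N d n Delta (F :: Bs) (t - s) (SS _)) as [Dc [Hc1 Hc2]]. fold pc in Dc, Hc1, Hc2.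
    assert (Hba : (nth 0%nat pb 0%nat <= nth 0%nat pa 0%nat)%nat) by (apply ORD; auto; apply Hb2; auto; lia).
    assert (Hca : (nth 0%nat pc 0%nat <= nth 0%nat pa 0%nat)%nat) by (apply ORD; auto; apply Hc2; auto; lia).
    assert (Key : forall pe, inRtildeDelta R N d n Delta pe -> (nth 0%nat pb 0%nat <= nth 0%nat pe 0%nat)%nat ->
       (nth 0%nat pc 0%nat <= nth 0%nat pe 0%nat)%nat -> (nth 0%nat pa 0%nat <= succRk R (d * L + d) (nth 0%nat pe 0%nat))%nat).
    { intros pe Hpe Hbe Hce.
      destruct (dom_decomp R N d n Delta pe Hinf Hn Hpe) as [e [tl [Epe [Hsub _]]]].
      rewrite Epe in Hpe, Hbe, Hce |- *. cbn [nth] in Hbe, Hce |- *.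
      set (q := succRk R d e :: tl).
      assert (Dq : inRtildeDelta R N d n Delta q).
      { apply (dom_replace R N d n Delta e tl); auto. apply Rsub_succ; auto.
        pose proof (iterk_ge R d e Hinf). lia. }
      assert (Hlt : (e < succRk R d e)%nat) by (apply (iterk_strict R 0 d e Hinf); lia).
      pose proof (DL1n pb q Db Dq ltac:(simpl; lia)). pose proof (DL1n pc q Dc Dq ltac:(simpl; lia)).
      destruct (Step2 q Dq) as [z [Dz [Ez Hz2]]].
      assert (Hzpa : dotA R (F :: Bs) z <= dotA R (F :: Bs) pa) by (apply Ha2; auto; lia).
      pose proof (ORD z pa Dz Da Hzpa) as Hfin. rewrite Ez in Hfin. simpl in Hfin. rewrite iterk_add. lia. }
    assert (Rpa : R (nth 0%nat pa 0%nat) = true).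
    { destruct (dom_decomp R N d n Delta pa Hinf Hn Da) as [e [tl [-> [_ [Re _]]]]]. auto. }
    assert (Rpb : R (nth 0%nat pb 0%nat) = true).
    { destruct (dom_decomp R N d n Delta pb Hinf Hn Db) as [e [tl [-> [_ [Re _]]]]]. auto. }
    assert (Rpc : R (nth 0%nat pc 0%nat) = true).
    { destruct (dom_decomp R N d n Delta pc Hinf Hn Dc) as [e [tl [-> [_ [Re _]]]]]. auto. }
    destruct (le_lt_dec (nth 0%nat pb 0%nat) (nth 0%nat pc 0%nat)) as [Hbc|Hbc].
    + right. apply conclude; auto; exact (Key pc Dc Hbc (le_n _)).
    + left. apply conclude; auto; exact (Key pb Db (le_n _) ltac:(lia)).
Qed.
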